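(* For any quantum automaton $\mathcal{A}$ over alphabet $\Sigma$ and any $w\in\Sigma^\omega$, $$f^{\mathrm{ND}}_{\mathcal{A}}(w)=\limsup_{n\to\infty}f^{\mathrm{MO}}_{\mathcal{A}}(w_n).$$
   Context: A quantum automaton is a tuple $\mathcal{A}=(\mathcal{H},|s_0\rangle,\Sigma,\{U_\sigma:\sigma\in\Sigma\},F)$ where $\mathcal{H}$ is a finite-dimensional complex Hilbert space, $|s_0\rangle$ a unit vector, $\Sigma$ a finite alphabet, each $U_\sigma$ unitary, and $F$ a subspace with orthogonal projection $P_F$. For a finite word $x=\sigma_1\cdots\sigma_m$, $U_x=U_{\sigma_m}\cdots U_{\sigma_1}$ and $f^{\mathrm{MO}}_{\mathcal{A}}(x)=\|P_FU_x|s_0\rangle\|^2$. For $w\in\Sigma^\omega$, $w_n$ is its prefix of length $n$, the non-disturbing run is $|s_n\rangle=U_{w_n}|s_0\rangle$, and $f^{\mathrm{ND}}_{\mathcal{A}}(w)=\sup_{|\psi\rangle}\sup_{\{n_i\}}\inf_{i\ge1}|\langle\psi|s_{n_i}\rangle|^2$ over unit $|\psi\rangle\in F$ and strictly increasing sequences $0\le n_1<n_2<\cdots$. *)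

(* Defs.v *)
From HB Require Import structures.
From mathcomp Require Import all_boot all_order all_algebra.
From mathcomp Require Import all_classical all_reals.
From mathcomp Require Import topology normedtype sequences.
From mathcomp.real_closed Require Import complex.
Set Implicit Arguments. Unset Strict Implicit. Unset Printing Implicit Defensive.
Import Order.TTheory GRing.Theory Num.Theory.
Local Open Scope ring_scope.
Local Open Scope classical_set_scope.

Section QA.
Variable R : realType.
Local Notation C := R[i].

Definition csqnorm (z : C) : R := complex.Re z ^+ 2 + complex.Im z ^+ 2.

Definition adj (m n : nat) (A : 'M[C]_(m, n)) : 'M[C]_(n, m) :=
  map_mx (@conjc R) A^T.

(* inner product <x|y>, antilinear in the first argument *)
Definition cdot (d : nat) (x y : 'cV[C]_d) : C := (adj x *m y) 0 0.

Definition vsqnorm (d : nat) (x : 'cV[C]_d) : R := \sum_(i < d) csqnorm (x i 0).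

Definition unitary (d : nat) (U : 'M[C]_d) : Prop := adj U *m U = 1%:M.

Definition orth_proj (d : nat) (P : 'M[C]_d) : Prop := adj P = P /\ P *m P = P.

Record qaut (Sigma : finType) := QAut {
  qa_dim : nat;
  qa_s0 : 'cV[C]_qa_dim;
  qa_U : Sigma -> 'M[C]_qa_dim;
  qa_P : 'M[C]_qa_dim  (* orthogonal projection P_F onto the accepting subspace F *)
}.

Definition qaut_wf (Sigma : finType) (A : qaut Sigma) : Prop :=
  vsqnorm (qa_s0 A) = 1 /\ (forall s, unitary (qa_U A s)) /\ orth_proj (qa_P A).

(* U_x for x = s_1 ... s_m is U_{s_m} ... U_{s_1} *)
Definition Uword (Sigma : finType) (A : qaut Sigma) (x : seq Sigma) : 'M[C]_(qa_dim A) :=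
  foldl (fun M s => qa_U A s *m M) 1%:M x.

Definition f_MO (Sigma : finType) (A : qaut Sigma) (x : seq Sigma) : R :=
  vsqnorm (qa_P A *m (Uword A x *m qa_s0 A)).

Definition wprefix (Sigma : Type) (w : nat -> Sigma) (n : nat) : seq Sigma :=
  [seq w i | i <- iota 0 n].

Definition ndrun (Sigma : finType) (A : qaut Sigma) (w : nat -> Sigma) (n : nat)
  : 'cV[C]_(qa_dim A) := Uword A (wprefix w n) *m qa_s0 A.

Definition f_ND (Sigma : finType) (A : qaut Sigma) (w : nat -> Sigma) : R :=
  sup [set r : R | exists (psi : 'cV[C]_(qa_dim A)) (ns : nat -> nat),
        [/\ vsqnorm psi = 1, qa_P A *m psi = psi,
            (forall i, (ns i < ns i.+1)%N) &
            r = inf [set csqnorm (cdot psi (ndrun A w (ns i))) | i in [set: nat]]]].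

End QA.

(* Main.v *)
Require Import Defs.
From HB Require Import structures.
From mathcomp Require Import all_boot all_order all_algebra.
From mathcomp Require Import all_classical all_reals.
From mathcomp Require Import topology normedtype sequences.
From mathcomp.real_closed Require Import complex.
From mathcomp Require Import ring lra.
Set Implicit Arguments. Unset Strict Implicit. Unset Printing Implicit Defensive.
Import Order.TTheory GRing.Theory Num.Theory.
Import numFieldNormedType.Exports.
Local Open Scope ring_scope.

Section Alg.
Variable R : realType.
Local Notation C := R[i].
Local Open Scope complex_scope.

Lemma csqnormE (z : C) : (csqnorm z)%:C = z * z^*.
Proof.
case: z => a b; rewrite /csqnorm /=.
apply/eqP; rewrite eq_complex /=; apply/andP; split; apply/eqP; ring.
Qed.

Lemma csqnorm_ge0 (z : C) : 0 <= csqnorm z.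
Proof. by rewrite /csqnorm addr_ge0 // sqr_ge0. Qed.

Lemma vsqnorm_ge0 d (x : 'cV[C]_d) : 0 <= vsqnorm x.
Proof. by rewrite /vsqnorm sumr_ge0 // => i _; exact: csqnorm_ge0. Qed.

Lemma adjM m n p (A : 'M[C]_(m, n)) (B : 'M[C]_(n, p)) :
  adj (A *m B) = adj B *m adj A.
Proof. by rewrite /adj trmx_mul map_mxM. Qed.

Lemma adjK m n (A : 'M[C]_(m, n)) : adj (adj A) = A.
Proof.
by apply/matrixP => i j; rewrite /adj !mxE conjcK.
Qed.

Lemma cdotE d (x y : 'cV[C]_d) : cdot x y = \sum_i (x i 0)^* * y i 0.
Proof. by rewrite /cdot mxE; apply: eq_bigr => i _; rewrite /adj !mxE. Qed.

Lemma vsqnormE d (x : 'cV[C]_d) : (vsqnorm x)%:C = cdot x x.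
Proof.
rewrite cdotE /vsqnorm rmorph_sum; apply: eq_bigr => i _.
by rewrite mulrC -csqnormE.
Qed.

Lemma cdotDl d (x y z : 'cV[C]_d) : cdot (x + y) z = cdot x z + cdot y z.
Proof. by rewrite !cdotE -big_split; apply: eq_bigr => i _; rewrite mxE rmorphD mulrDl. Qed.
Lemma cdotDr d (x y z : 'cV[C]_d) : cdot z (x + y) = cdot z x + cdot z y.
Proof. by rewrite !cdotE -big_split; apply: eq_bigr => i _; rewrite mxE mulrDr. Qed.
Lemma cdotNl d (x z : 'cV[C]_d) : cdot (- x) z = - cdot x z.
Proof. by rewrite !cdotE -sumrN; apply: eq_bigr => i _; rewrite mxE rmorphN mulNr. Qed.
Lemma cdotNr d (x z : 'cV[C]_d) : cdot z (- x) = - cdot z x.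
Proof. by rewrite !cdotE -sumrN; apply: eq_bigr => i _; rewrite mxE mulrN. Qed.
Lemma cdotZl d a (x z : 'cV[C]_d) : cdot (a *: x) z = a^* * cdot x z.
Proof. by rewrite !cdotE mulr_sumr; apply: eq_bigr => i _; rewrite mxE rmorphM mulrA. Qed.
Lemma cdotZr d a (x z : 'cV[C]_d) : cdot z (a *: x) = a * cdot z x.
Proof. by rewrite !cdotE mulr_sumr; apply: eq_bigr => i _; rewrite mxE mulrCA. Qed.
Lemma cdotC d (x y : 'cV[C]_d) : cdot y x = (cdot x y)^*.
Proof. by rewrite !cdotE rmorph_sum; apply: eq_bigr => i _; rewrite rmorphM /= conjcK mulrC. Qed.

Lemma cdotMr d (M : 'M[C]_d) (x y : 'cV[C]_d) : cdot x (M *m y) = cdot (adj M *m x) y.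
Proof. by rewrite /cdot adjM adjK mulmxA. Qed.


Lemma realcB (a b : R) : (a - b)%:C = a%:C - b%:C :> C.
Proof. by apply/eqP; rewrite eq_complex /= subr0 !eqxx. Qed.
Lemma realcD (a b : R) : (a + b)%:C = a%:C + b%:C :> C.
Proof. by apply/eqP; rewrite eq_complex /= addr0 !eqxx. Qed.

Lemma cs_unit d (psi y : 'cV[C]_d) : vsqnorm psi = 1 ->
  vsqnorm y - csqnorm (cdot psi y) = vsqnorm (y - cdot psi y *: psi).
Proof.
move=> H1; apply: complexI; rewrite realcB !vsqnormE csqnormE.
rewrite cdotDl !cdotDr !cdotNl !cdotNr !cdotZl !cdotZr.
have -> : cdot psi psi = 1 by rewrite -vsqnormE H1.
rewrite [cdot y psi]cdotC; ring.
Qed.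

Lemma cs_unit_le d (psi y : 'cV[C]_d) : vsqnorm psi = 1 ->
  csqnorm (cdot psi y) <= vsqnorm y.
Proof.
move=> H1; rewrite -subr_ge0 cs_unit //; exact: vsqnorm_ge0.
Qed.

Lemma adj1 d : adj (1%:M : 'M[C]_d) = 1%:M.
Proof.
apply/matrixP => i j; rewrite /adj !mxE eq_sym.
by rewrite conjc_nat.
Qed.

Lemma cdotP d (P : 'M[C]_d) (x : 'cV[C]_d) : orth_proj P ->
  cdot (P *m x) (P *m x) = cdot (P *m x) x /\ cdot x (P *m x) = cdot (P *m x) x.
Proof.
case=> HA HP; split; first by rewrite cdotMr HA mulmxA HP.
by rewrite cdotMr HA.
Qed.

Lemma proj_le d (P : 'M[C]_d) (x : 'cV[C]_d) : orth_proj P ->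
  vsqnorm (P *m x) <= vsqnorm x.
Proof.
move=> HP; have [E1 E2] := cdotP x HP.
have E : vsqnorm x = vsqnorm (P *m x) + vsqnorm (x - P *m x).
  apply: complexI; rewrite realcD !vsqnormE.
  rewrite {1 2}(_ : x = P *m x + (x - P *m x)); last by rewrite addrC subrK.
  rewrite !cdotDl !cdotDr !cdotNl !cdotNr !E1 E2.
  ring.
by rewrite E lerDl vsqnorm_ge0.
Qed.

Lemma key_le d (P : 'M[C]_d) (psi y : 'cV[C]_d) : orth_proj P ->
  vsqnorm psi = 1 -> P *m psi = psi -> csqnorm (cdot psi y) <= vsqnorm (P *m y).
Proof.
move=> [HA HP] H1 Hpsi.
have -> : cdot psi y = cdot psi (P *m y) by rewrite cdotMr HA Hpsi.
exact: cs_unit_le.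
Qed.


Lemma Uword_unitary (Sigma : finType) (A : qaut R Sigma) x :
  qaut_wf A -> adj (Uword A x) *m Uword A x = 1%:M.
Proof.
move=> [_ [HU _]]; rewrite /Uword.
suff H : forall M : 'M[C]_(qa_dim A), adj M *m M = 1%:M ->
   adj (foldl (fun M s => qa_U A s *m M) M x) *m foldl (fun M s => qa_U A s *m M) M x = 1%:M.
  by apply: H; rewrite adj1 mul1mx.
elim: x => [|s x IH] M //= HM.
apply: IH; rewrite adjM -mulmxA [adj (qa_U A s) *m _]mulmxA.
by rewrite HU mul1mx.
Qed.

Lemma ndrun_norm (Sigma : finType) (A : qaut R Sigma) w n :
  qaut_wf A -> vsqnorm (ndrun A w n) = 1.
Proof.
move=> wf; apply: complexI; rewrite vsqnormE /ndrun cdotMr mulmxA.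
by rewrite Uword_unitary // mul1mx -vsqnormE; case: wf => ->.
Qed.

End Alg.

Section Ana.
Variable R : realType.
Local Notation C := R[i].
Local Open Scope complex_scope.
Local Open Scope classical_set_scope.

Definition ccvg (z : nat -> C) (l : C) :=
  (fun n => complex.Re (z n)) @ \oo --> complex.Re l /\
  (fun n => complex.Im (z n)) @ \oo --> complex.Im l.

Lemma ReM (a b : C) : complex.Re (a * b) = complex.Re a * complex.Re b - complex.Im a * complex.Im b.
Proof. by case: a; case: b. Qed.
Lemma ImM (a b : C) : complex.Im (a * b) = complex.Re a * complex.Im b + complex.Im a * complex.Re b.
Proof. by case: a; case: b => /= *; rewrite addrC. Qed.

Lemma ReD (a b : C) : complex.Re (a + b) = complex.Re a + complex.Re b.
Proof. by case: a; case: b. Qed.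
Lemma ImD (a b : C) : complex.Im (a + b) = complex.Im a + complex.Im b.
Proof. by case: a; case: b. Qed.

Lemma ReJ (a : C) : complex.Re a^* = complex.Re a.
Proof. by case: a. Qed.
Lemma ImJ (a : C) : complex.Im a^* = - complex.Im a.
Proof. by case: a. Qed.

Lemma ccvg_cst (a : C) : ccvg (fun=> a) a.
Proof. by split; exact: cvg_cst. Qed.

Lemma ccvgD z y a b : ccvg z a -> ccvg y b -> ccvg (fun n => z n + y n) (a + b).
Proof.
move=> [z1 z2] [y1 y2]; split.
- have -> : (fun n => complex.Re (z n + y n)) = (fun n => complex.Re (z n) + complex.Re (y n)).
    by apply/funext => n; rewrite ReD.
  rewrite ReD.
  exact: cvgD.
- have -> : (fun n => complex.Im (z n + y n)) = (fun n => complex.Im (z n) + complex.Im (y n)).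
    by apply/funext => n; rewrite ImD.
  rewrite ImD.
  exact: cvgD.
Qed.

Lemma ccvgM z y a b : ccvg z a -> ccvg y b -> ccvg (fun n => z n * y n) (a * b).
Proof.
move=> [z1 z2] [y1 y2]; split.
- have -> : (fun n => complex.Re (z n * y n)) =
     (fun n => complex.Re (z n) * complex.Re (y n) - complex.Im (z n) * complex.Im (y n)).
    by apply/funext => n; rewrite ReM.
  rewrite ReM; apply: cvgB; exact: cvgM.
- have -> : (fun n => complex.Im (z n * y n)) =
     (fun n => complex.Re (z n) * complex.Im (y n) + complex.Im (z n) * complex.Re (y n)).
    by apply/funext => n; rewrite ImM.
  rewrite ImM; apply: cvgD; exact: cvgM.
Qed.

Lemma ccvgJ z a : ccvg z a -> ccvg (fun n => (z n)^*) a^*.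
Proof.
move=> [z1 z2]; split.
- have -> : (fun n => complex.Re ((z n)^*)) = (fun n => complex.Re (z n)).
    by apply/funext => n; rewrite ReJ.
  by rewrite ReJ.
- have -> : (fun n => complex.Im ((z n)^*)) = (fun n => - complex.Im (z n)).
    by apply/funext => n; rewrite ImJ.
  rewrite ImJ; exact: cvgN.
Qed.

Lemma ccvg_sum (I : Type) (s : seq I) (F : I -> nat -> C) (l : I -> C) :
  (forall i, ccvg (F i) (l i)) ->
  ccvg (fun n => \sum_(i <- s) F i n) (\sum_(i <- s) l i).
Proof.
move=> H; elim: s => [|i s IH].
  rewrite big_nil.
  have -> : (fun n => \sum_(i <- [::]) F i n) = (fun=> 0) by apply/funext => n; rewrite big_nil.
  exact: ccvg_cst.
rewrite big_cons.
have -> : (fun n => \sum_(j <- i :: s) F j n) = (fun n => F i n + \sum_(j <- s) F j n).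
  by apply/funext => n; rewrite big_cons.
exact: ccvgD.
Qed.

Lemma ccvg_csqnorm z a : ccvg z a -> (fun n => csqnorm (z n)) @ \oo --> csqnorm a.
Proof.
move=> [z1 z2]; rewrite /csqnorm.
apply: cvgD; rewrite expr2; under eq_fun do rewrite expr2; exact: cvgM.
Qed.

Lemma ccvg_real (f : nat -> R) a : ccvg (fun n => (f n)%:C) a%:C -> f @ \oo --> a.
Proof. by case. Qed.

Definition vcvg d (x : nat -> 'cV[C]_d) (l : 'cV[C]_d) := forall i, ccvg (fun n => x n i 0) (l i 0).

Lemma vcvg_mul d (M : 'M[C]_d) x l : vcvg x l -> vcvg (fun n => M *m x n) (M *m l).
Proof.
move=> H i; rewrite mxE.
have -> : (fun n => (M *m x n) i 0) = (fun n => \sum_j M i j * x n j 0).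
  by apply/funext => n; rewrite mxE.
apply: ccvg_sum => j; apply: ccvgM; [exact: ccvg_cst|exact: H].
Qed.

Lemma vcvg_cdot d (psi : 'cV[C]_d) x l : vcvg x l -> ccvg (fun n => cdot psi (x n)) (cdot psi l).
Proof.
move=> H; rewrite cdotE.
have -> : (fun n => cdot psi (x n)) = (fun n => \sum_j (psi j 0)^* * x n j 0).
  by apply/funext => n; rewrite cdotE.
apply: ccvg_sum => j; apply: ccvgM; [exact: ccvg_cst|exact: H].
Qed.

Lemma vcvg_vsqnorm d x (l : 'cV[C]_d) : vcvg x l -> (fun n => vsqnorm (x n)) @ \oo --> vsqnorm l.
Proof.
move=> H; apply: ccvg_real.
have -> : (fun n => (vsqnorm (x n))%:C) = (fun n => cdot (x n) (x n)).
  by apply/funext => n; rewrite vsqnormE.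
rewrite vsqnormE cdotE.
have -> : (fun n => cdot (x n) (x n)) = (fun n => \sum_j (x n j 0)^* * x n j 0).
  by apply/funext => n; rewrite cdotE.
apply: ccvg_sum => j; apply: ccvgM; [apply: ccvgJ|]; exact: H.
Qed.

Lemma incr_ge (h : nat -> nat) : (forall n, (h n < h n.+1)%N) -> forall n, (n <= h n)%N.
Proof. move=> Hh; elim=> [|n IH] //; exact: leq_ltn_trans IH (Hh n). Qed.

Lemma incr_lt (h : nat -> nat) : (forall n, (h n < h n.+1)%N) -> forall a b, (a < b)%N -> (h a < h b)%N.
Proof.
move=> Hh a; elim=> [//|b IH]; rewrite ltnS leq_eqVlt => /orP[/eqP ->|/IH H]; first exact: Hh.
exact: ltn_trans H (Hh b).
Qed.

Lemma incr_cvg (h : nat -> nat) : (forall n, (h n < h n.+1)%N) -> h @ \oo --> \oo.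
Proof.
move=> Hh A [N _ HA]; exists N => // n /= Hn; apply: HA => /=.
have := leq_trans Hn (incr_ge Hh n). done.
Qed.

Lemma subseq_cvg (f : nat -> R) (h : nat -> nat) (l : R) : (forall n, (h n < h n.+1)%N) ->
  f @ \oo --> l -> (f \o h) @ \oo --> l.
Proof. move=> Hh Hf; exact: cvg_comp (incr_cvg Hh) Hf. Qed.

Lemma bnd1 (f : nat -> R) : (forall n, `|f n| <= 1) -> bounded_fun f.
Proof.
move=> H; rewrite /=. apply: (@sub_boundedl _ _ _ f (fun _ => 1 : R)).
  by move=> x _; rewrite normr1.
exact: bounded_cst.
Qed.

Lemma multi_bw (I : eqType) (F : I -> nat -> R) (s : seq I) :
  (forall j n, `|F j n| <= 1) ->
  exists h : nat -> nat, (forall n, (h n < h n.+1)%N) /\ forall j, j \in s -> cvgn (F j \o h).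
Proof.
move=> HF; elim: s => [|j s [h [Hh Hc]]].
  by exists id; split => // n; rewrite ltnSn.
have bnd : bounded_fun (F j \o h) by apply: bnd1 => n; exact: HF.
have [g Hg Hcg] := bolzano_weierstrass bnd.
have Hg' : forall n, (g n < g n.+1)%N by move/increasing_seqP: Hg.
exists (h \o g); split.
  by move=> n /=; apply: incr_lt => //; exact: Hg'.
move=> j0; rewrite inE => /orP[/eqP ->|/Hc Hj0]; first exact: Hcg.
apply/cvg_ex; exists (limn (F j0 \o h)).
exact: (subseq_cvg (f := F j0 \o h) Hg' Hj0).
Qed.

Lemma csq_le d (x : 'cV[C]_d) i : csqnorm (x i 0) <= vsqnorm x.
Proof.
rewrite /vsqnorm (bigD1 i) //= lerDl sumr_ge0 // => j _; exact: csqnorm_ge0.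
Qed.

Lemma vec_bw d (x : nat -> 'cV[C]_d) : (forall n, vsqnorm (x n) = 1) ->
  exists h l, (forall n, (h n < h n.+1)%N) /\ vcvg (fun n => x (h n)) l.
Proof.
move=> Hx.
pose F (p : 'I_d * bool) n := if p.2 then complex.Im (x n p.1 0) else complex.Re (x n p.1 0).
have HF : forall j n, `|F j n| <= 1.
  move=> [i b] n; have := csq_le (x n) i; rewrite Hx /F /csqnorm.
  case: b => /=; rewrite ler_norml => H; apply/andP; split; nra.
have [h [Hh Hc]] := multi_bw (index_enum _) HF.
exists h, (\col_i (limn (F (i, false) \o h) +i* limn (F (i, true) \o h))); split => // i.
split; rewrite mxE /=.
  exact: (Hc (i, false) (mem_index_enum _)).
exact: (Hc (i, true) (mem_index_enum _)).
Qed.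

End Ana.

Local Open Scope classical_set_scope.
Local Open Scope complex_scope.

Lemma realcM (R : realType) (a b : R) : (a * b)%:C = a%:C * b%:C :> R[i].
Proof. by apply/eqP; rewrite eq_complex /= !mulr0 !mul0r subr0 addr0 !eqxx. Qed.

Lemma conjR (R : realType) (a : R) : Num.conj (a%:C : R[i]) = a%:C.
Proof. exact: conjc_real. Qed.

Theorem proposition2 (R : realType) (Sigma : finType) (A : qaut R Sigma)
  (w : nat -> Sigma) :
  qaut_wf A ->
  f_ND A w = limn_sup (fun n => f_MO A (wprefix w n)).
Proof.
move=> wf.
have hP : orth_proj (qa_P A) by case: wf => _ [].
have hs : forall n, vsqnorm (ndrun A w n) = 1 by move=> n; exact: ndrun_norm.
set u := (fun n => f_MO A (wprefix w n)).
have uE : forall n, u n = vsqnorm (qa_P A *m ndrun A w n) by [].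
have u0 : forall n, 0 <= u n by move=> n; rewrite uE vsqnorm_ge0.
have u1 : forall n, u n <= 1 by move=> n; rewrite uE -(hs n); exact: proj_le.
have bu : bounded_fun u by apply: bnd1 => n; rewrite ger0_norm.
have ubd : forall n, has_ubound (sdrop u n).
  by move=> n; exists 1 => _ [k _ <-]; exact: u1.
have sups_ge : forall n k, (n <= k)%N -> u k <= sups u n.
  by move=> n k nk; apply: ub_le_sup => //; exists k.
have rng_lb : has_lbound (range (sups u)).
  by exists 0 => _ [n _ <-]; apply: le_trans (u0 n) (sups_ge n n (leqnn n)).
rewrite limn_supE //.
set L := inf (range (sups u)).
have L0 : 0 <= L.
  apply: lb_le_inf; first by exists (sups u 0), 0.
  by move=> _ [n _ <-]; apply: le_trans (u0 n) (sups_ge n n (leqnn n)).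
have Lle : forall n, L <= sups u n by move=> n; apply: ge_inf => //; exists n.
rewrite /f_ND; set S := [set r | _].
have S01 : forall r, S r -> 0 <= r <= 1.
  move=> r [psi [ns [Hpsi HPpsi Hns ->]]].
  have lb : has_lbound [set csqnorm (cdot psi (ndrun A w (ns i))) | i in [set: nat]].
    by exists 0 => _ [i _ <-]; exact: csqnorm_ge0.
  apply/andP; split.
    apply: lb_le_inf; first by exists (csqnorm (cdot psi (ndrun A w (ns 0)))), 0.
    by move=> _ [i _ <-]; exact: csqnorm_ge0.
  apply: le_trans (ge_inf lb (ex_intro2 _ _ 0 I erefl)) _.
  by rewrite -(hs (ns 0)); exact: cs_unit_le.
have Sub : has_ubound S by exists 1 => r /S01 /andP[].
have SL : forall r, S r -> r <= L.
  move=> r [psi [ns [Hpsi HPpsi Hns ->]]].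
  have lb : has_lbound [set csqnorm (cdot psi (ndrun A w (ns i))) | i in [set: nat]].
    by exists 0 => _ [i _ <-]; exact: csqnorm_ge0.
  apply: lb_le_inf; first by exists (sups u 0), 0.
  move=> _ [n _ <-].
  apply: le_trans (ge_inf lb (ex_intro2 _ _ n I erefl)) _.
  apply: le_trans (key_le _ hP Hpsi HPpsi) _.
  exact: sups_ge (incr_ge Hns n).
have supS0 : 0 <= sup S.
  have [[r Sr]|Hn] := pselect (S !=set0).
    by apply: le_trans (ub_le_sup Sub Sr); case/andP: (S01 r Sr).
  by rewrite sup_out // => -[HS _]; apply: Hn.
apply/eqP; rewrite eq_le; apply/andP; split.
  have [HS|Hn] := pselect (S !=set0); first exact: ge_sup.
  by rewrite sup_out // => -[HS _]; apply: Hn.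
apply/ler_addgt0Pr => e e0.
set e2 := e / 2.
have e20 : 0 < e2 by rewrite /e2 divr_gt0.
have stepa : forall n, exists m, (n <= m)%N /\ L - e2 < u m.
  move=> n.
  have hs0 : has_sup (sdrop u n) by split; [exists (u n), n => /= | exact: ubd].
  have [y [m nm <-] Hy] := sup_adherent e20 hs0.
  exists m; split => //; apply: le_lt_trans Hy; rewrite lerD2r; exact: Lle.
have [phi Hphi] := choice stepa.
pose g := fix g k := if k is k'.+1 then phi (g k').+1 else phi 0.
have Hg : forall k, (g k < g k.+1)%N by move=> k /=; exact: (Hphi _).1.
have Hgu : forall k, L - e2 < u (g k) by case => [|k] /=; exact: (Hphi _).2.
have [h [l [Hh Hv]]] := @vec_bw R _ (fun k => ndrun A w (g k)) (fun k => hs (g k)).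
pose t := fun n => g (h n).
have Ht : forall n, (t n < t n.+1)%N by move=> n; exact: (incr_lt Hg (Hh n)).
pose v := qa_P A *m l.
pose M := vsqnorm v.
have cu : (fun n => u (t n)) @ \oo --> M.
  by apply: vcvg_vsqnorm; exact: vcvg_mul.
have ML : L - e2 <= M.
  rewrite leNgt; apply/negP => HM.
  have [N _ HN] := @cvgr_lt _ _ _ _ _ _ cu _ HM.
  have := HN N (leqnn N) => /= H; have := Hgu (h N); rewrite /t in H; lra.
have e2E : e = e2 + e2 by rewrite /e2 -splitr.
have [M0|Mpos] := eqVneq M 0.
  rewrite M0 in ML; lra.
have Mgt0 : 0 < M by rewrite lt_def Mpos vsqnorm_ge0.
set q := Num.sqrt M.
have q0 : 0 < q by rewrite sqrtr_gt0.
have qM : q ^+ 2 = M by rewrite sqr_sqrtr // ltW.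
pose psi := (q^-1)%:C *: v.
have Hpsi1 : vsqnorm psi = 1.
  apply: complexI; rewrite vsqnormE cdotZl cdotZr conjR -vsqnormE -/M.
  rewrite -!realcM; congr (_%:C); rewrite -qM; field; exact: lt0r_neq0.
have HPpsi : qa_P A *m psi = psi.
  by rewrite /psi scalemxAr /v mulmxA; case: hP => _ ->.
have cl : cdot psi l = q%:C.
  rewrite cdotZl conjR.
  have [E1 E2] := cdotP l hP.
  rewrite -E1 -vsqnormE -/M -realcM; congr (_%:C); rewrite -qM; field; exact: lt0r_neq0.
have cc : (fun n => csqnorm (cdot psi (ndrun A w (t n)))) @ \oo --> M.
  have := ccvg_csqnorm (vcvg_cdot psi Hv); rewrite cl.
  by rewrite /csqnorm /= expr0n /= addr0 qM.
have Mlt : M - e2 < M by lra.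
have [K _ HK] := @cvgr_gt _ _ _ _ _ _ cc _ Mlt.
pose ns := fun i => t (i + K).
set r := inf [set csqnorm (cdot psi (ndrun A w (ns i))) | i in [set: nat]].
have Sr : S r.
  exists psi, ns; split => //; move=> i; have := Ht (i + K); by rewrite -addSn.
have rge : M - e2 <= r.
  apply: lb_le_inf; first by exists (csqnorm (cdot psi (ndrun A w (ns 0)))), 0.
  move=> _ [i _ <-]; apply: ltW; exact: (HK (i + K) (leq_addl _ _)).
have := ub_le_sup Sub Sr.
lra.
Qed.
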